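(* Let $G$ be a graph and let $(P,z)$ be a near-obstruction in $G$. Then the subgraph of $G$ induced by $V(P)\cup\{z\}$ contains an induced subgraph that is a Meyniel obstruction.
   Context: A path $v_0$-$v_1$-$\cdots$-$v_p$ consists of distinct vertices with $v_jv_{j+1}$ edges for all $j$; a chord is an edge of $G$ between two non-consecutive vertices of the path. A near-obstruction in $G$ is a pair $(P,z)$ where $P=v_0$-$\cdots$-$v_p$ is a path in $G$ with $p\ge 3$ odd, $P$ has at most one chord and such a chord (if any) is $v_{t-1}v_{t+1}$ with $0<t<p-1$, $z$ is a vertex of $G$ not on $P$ adjacent to both $v_0$ and $v_p$, and one of the following holds: (Type 1) $v_0v_2$ is the only chord of $P$ and $z$ is adjacent to neither $v_1$ nor $v_2$; (Type 2) $v_1v_3$ is the only chord of $P$ and $z$ is non-adjacent to at least one of $v_1,v_3$; (Type 3) $v_0v_2$ is not a chord of $P$ and $z$ is not adjacent to $v_1$; (Type 4) neither $v_0v_2$ nor $v_1v_3$ is a chord of $P$, and $z$ is adjacent to $v_1$ and not to $v_2$. A Meyniel obstruction is an odd cycle with at least five vertices and at most one chord. *)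

(* Defs.v *)
(* a finite simple graph is a symmetric irreflexive
   relation e on a finType T. *)
From mathcomp Require Import all_boot.
Set Implicit Arguments. Unset Strict Implicit. Unset Printing Implicit Defensive.

Section Defs.
Variable T : finType.
Variable e : rel T.

Definition is_path (v : nat -> T) (p : nat) : Prop :=
  (forall i j, i <= p -> j <= p -> v i = v j -> i = j) /\
  (forall i, i < p -> e (v i) (v i.+1)).

Definition path_chord (v : nat -> T) (p i j : nat) : Prop :=
  [/\ i.+1 < j, j <= p & e (v i) (v j)].

Definition on_path (v : nat -> T) (p : nat) (x : T) : Prop :=
  exists2 i, i <= p & v i = x.

Definition only_chord (v : nat -> T) (p a b : nat) : Prop :=
  path_chord v p a b /\ (forall i j, path_chord v p i j -> i = a /\ j = b).

Definition near_obstruction (v : nat -> T) (p : nat) (z : T) : Prop :=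
  [/\ is_path v p, 3 <= p, odd p &
    [/\
      (forall i j i' j', path_chord v p i j -> path_chord v p i' j' ->
                         i = i' /\ j = j'),
      (forall i j, path_chord v p i j ->
         exists t, [/\ 0 < t, t < p.-1, i = t.-1 & j = t.+1]),
      [/\ ~ on_path v p z, e z (v 0) & e z (v p)] &
      [\/
          [/\ only_chord v p 0 2, ~~ e z (v 1) & ~~ e z (v 2)],
          only_chord v p 1 3 /\ (~~ e z (v 1) \/ ~~ e z (v 3)),
          ~ path_chord v p 0 2 /\ ~~ e z (v 1) |
          [/\ ~ path_chord v p 0 2, ~ path_chord v p 1 3,
              e z (v 1) & ~~ e z (v 2)]]]].

Definition is_cycle (c : nat -> T) (k : nat) : Prop :=
  [/\ 3 <= k,
      (forall i j, i < k -> j < k -> c i = c j -> i = j) &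
      (forall i, i < k -> e (c i) (c (i.+1 %% k)))].

Definition cycle_chord (c : nat -> T) (k i j : nat) : Prop :=
  [/\ i.+1 < j, j < k, ~ (i = 0 /\ j = k.-1) & e (c i) (c j)].

Definition meyniel_obstruction (c : nat -> T) (k : nat) : Prop :=
  [/\ is_cycle c k, odd k, 5 <= k &
      (forall i j i' j', cycle_chord c k i j -> cycle_chord c k i' j' ->
                         i = i' /\ j = j')].

End Defs.

(* Main.v *)
Require Import Defs.
From mathcomp Require Import all_boot zify.
From Stdlib Require Import Classical.

Set Implicit Arguments. Unset Strict Implicit. Unset Printing Implicit Defensive.

Lemma oddE n : odd n = (n %% 2 == 1).
Proof. by rewrite modn2; case: (odd n). Qed.

Section Gen.
Variables (T : finType) (e : rel T).
Hypothesis e_sym : symmetric e.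
Variables (v : nat -> T) (p : nat) (z : T).
Hypothesis Hinj : forall i j, i <= p -> j <= p -> v i = v j -> i = j.
Hypothesis Hnz : ~ on_path v p z.
Hypothesis Hchu : forall i j i' j', path_chord e v p i j -> path_chord e v p i' j' ->
                         i = i' /\ j = j'.

Lemma gen (w : nat -> nat) (m : nat) :
  (forall s, s < m -> w s <= p) ->
  (forall s s', s < s' -> s' < m -> w s < w s') ->
  (forall s, s.+1 < m -> e (v (w s)) (v (w s.+1))) ->
  e z (v (w 0)) -> e z (v (w m.-1)) -> ~~ odd m -> 4 <= m ->
  (forall s s', 0 < s -> s < m.-1 -> 0 < s' -> s' < m.-1 ->
     e z (v (w s)) -> e z (v (w s')) -> s = s') ->
  (forall s s1 s1', 0 < s -> s < m.-1 -> e z (v (w s)) -> s1.+1 < s1' -> s1' < m ->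
     e (v (w s1)) (v (w s1')) -> False) ->
  exists (c : nat -> T) (k : nat),
    meyniel_obstruction e c k /\
    (forall i, i < k -> on_path v p (c i) \/ c i = z).
Proof.
move=> Hp Hmono Hedge Hz0 Hzm Hodd H4 H2 H3.
have winj : forall s s', s < m -> s' < m -> w s = w s' -> s = s'.
  move=> s s' hs hs' E; case: (ltngtP s s') => // h.
  - by have := Hmono _ _ h hs'; rewrite E ltnn.
  - by have := Hmono _ _ h hs; rewrite E ltnn.
exists (fun i => if i is s.+1 then v (w s) else z), m.+1.
split; last first.
  case=> [|s] hs; [by right|left]; exists (w s) => //; exact: Hp.
have Hzv : forall s, s < m -> z <> v (w s).
  move=> s hs E; apply: Hnz; exists (w s) => //; exact: Hp.
have pc : forall s s', s.+1 < s' -> s' < m -> e (v (w s)) (v (w s')) ->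
           path_chord e v p (w s) (w s').
  move=> s s' h1 h2 h3; split => //; last exact: Hp.
  have a1 := Hmono s s.+1 (ltnSn s) (ltn_trans h1 h2).
  have a2 := Hmono s.+1 s' h1 h2. lia.
split.
- split.
  + lia.
  + case=> [|i] [|j] hi hj //=.
    * move=> E; exfalso; apply: (Hzv j) => //.
    * move=> E; exfalso; apply: (Hzv i) => //.
    * move=> E; congr S; apply: winj => //; apply: Hinj => //; apply: Hp => //.
  + move=> i hi.
    case: (ltngtP i m) => him.
    * rewrite modn_small //; case: i hi him => [|i] hi him //=.
      exact: Hedge.
    * lia.
    * subst i; rewrite modnn /=.
      case: m Hzm Hodd H4 Hp Hmono Hedge H2 H3 winj Hzv pc hi => [|m] //= Hzm *.
      by rewrite e_sym.
- by rewrite oddS.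
- by [].
- move=> i j i' j' [h1 h2 h3 h4] [h1' h2' h3' h4'].
  case: i h1 h3 h4 => [|s1] h1 h3 h4; case: i' h1' h3' h4' => [|s2] h1' h3' h4'.
  + case: j h1 h2 h3 h4 => [|s] //= h1 h2 h3 h4.
    case: j' h1' h2' h3' h4' => [|s'] //= h1' h2' h3' h4'.
    split => //; congr S; apply: H2 => //; lia.
  + case: j h1 h2 h3 h4 => [|s] //= h1 h2 h3 h4.
    case: j' h1' h2' h3' h4' => [|s'] //= h1' h2' h3' h4'.
    exfalso; apply: (H3 s s2 s') => //; lia.
  + case: j h1 h2 h3 h4 => [|s] //= h1 h2 h3 h4.
    case: j' h1' h2' h3' h4' => [|s'] //= h1' h2' h3' h4'.
    exfalso; apply: (H3 s' s1 s) => //; lia.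
  + case: j h1 h2 h3 h4 => [|s] //= h1 h2 h3 h4.
    case: j' h1' h2' h3' h4' => [|s'] //= h1' h2' h3' h4'.
    have [E1 E2] := Hchu (pc s1 s ltac:(lia) ltac:(lia) h4) (pc s2 s' ltac:(lia) ltac:(lia) h4').
    split; congr S; apply: winj => //; lia.
Qed.

Hypothesis Hedg : forall i, i < p -> e (v i) (v i.+1).

Lemma LA (i j : nat) : i < j -> j <= p -> e z (v i) -> e z (v j) -> odd (j - i) -> 3 <= j - i ->
  (forall x y, i < x -> x < j -> i < y -> y < j -> e z (v x) -> e z (v y) -> x = y) ->
  (forall x x1 y1, i < x -> x < j -> e z (v x) -> i <= x1 -> y1 <= j ->
      path_chord e v p x1 y1 -> False) ->
  exists (c : nat -> T) (k : nat),
    meyniel_obstruction e c k /\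
    (forall i, i < k -> on_path v p (c i) \/ c i = z).
Proof.
move=> hij hj Ni Nj Hodd H3 HA2 HA3.
apply: (@gen (fun s => i + s) (j - i).+1).
- move=> s hs; lia.
- move=> s s' h1 h2; lia.
- move=> s hs; rewrite addnS; apply: Hedg; lia.
- by rewrite addn0.
- by rewrite /= subnKC // ltnW.
- by rewrite oddS negbK.
- lia.
- move=> s s' h1 h2 h3 h4 E1 E2; have := HA2 _ _ _ _ _ _ E1 E2; lia.
- move=> s s1 s1' h1 h2 E h3 h4 E2.
  apply: (HA3 (i + s) (i + s1) (i + s1')) => //; try lia.
  split => //; lia.
Qed.

Lemma LB (i j t : nat) : i < t -> t < j -> j <= p -> e (v t.-1) (v t.+1) ->
  e z (v i) -> e z (v j) -> ~~ odd (j - i) -> 4 <= j - i ->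
  (forall x y, i < x -> x < j -> i < y -> y < j -> x <> t -> y <> t ->
     e z (v x) -> e z (v y) -> x = y) ->
  exists (c : nat -> T) (k : nat),
    meyniel_obstruction e c k /\
    (forall i, i < k -> on_path v p (c i) \/ c i = z).
Proof.
move=> hit htj hj Ech Ni Nj Hodd H4 HB2.
have tch : path_chord e v p t.-1 t.+1 by split => //; lia.
pose w s := if i + s < t then i + s else (i + s).+1.
have wE : forall s, (i + s < t /\ w s = i + s) \/ (t <= i + s /\ w s = (i + s).+1).
  by move=> s; rewrite /w; case: ltnP; [left|right].
apply: (@gen w (j - i)).
- move=> s hs; case: (wE s); lia.
- move=> s s' h1 h2; case: (wE s); case: (wE s'); lia.
- move=> s hs; case: (wE s) => [[h1 ->]|[h1 ->]]; case: (wE s.+1) => [[h2 ->]|[h2 ->]].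
  + rewrite addnS; apply: Hedg; lia.
  + have -> : i + s = t.-1 by lia.
    have -> : (i + s.+1).+1 = t.+1 by lia.
    exact: Ech.
  + lia.
  + have -> : (i + s.+1).+1 = (i + s).+2 by lia.
    apply: Hedg; lia.
- by case: (wE 0) => [[_ ->]|[h _]]; [rewrite addn0 | lia].
- case: (wE (j - i).-1) => [[h ->]|[h ->]]; first lia.
  by have -> : (i + (j - i).-1).+1 = j by lia.
- by [].
- by [].
- move=> s s' h1 h2 h3 h4 E1 E2.
  case: (wE s) => [[a1 a2]|[a1 a2]]; case: (wE s') => [[b1 b2]|[b1 b2]];
  rewrite a2 b2 in E1 E2; have := HB2 _ _ _ _ _ _ _ _ E1 E2; lia.
- move=> s s1 s1' h1 h2 E h3 h4 E2.
  have pc : path_chord e v p (w s1) (w s1').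
    split => //; case: (wE s1); case: (wE s1'); lia.
  have [u1 u2] := Hchu pc tch.
  move: u1 u2; case: (wE s1); case: (wE s1'); lia.
Qed.
End Gen.

Lemma prevN (P : nat -> bool) x : P 0 -> 0 < x ->
  exists a, [/\ a < x, P a & forall y, a < y -> y < x -> ~~ P y].
Proof.
move=> P0; elim: x => [//|[|n] IH] _.
  by exists 0; split => // y h1 h2; lia.
case: (boolP (P n.+1)) => Pn.
  by exists n.+1; split => // y h1 h2; lia.
have [a [h1 h2 h3]] := IH (ltn0Sn n).
exists a; split => //; first lia.
move=> y hy1 hy2; case: (ltngtP y n.+1) => h.
- exact: h3.
- lia.
- by subst y.
Qed.

Lemma nextN (P : nat -> bool) x q : P q -> x < q ->
  exists d, [/\ x < d, d <= q, P d & forall y, x < y -> y < d -> ~~ P y].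
Proof.
move=> Pq hxq.
have ex : exists n, (fun n => (x < n) && P n) n by exists q; rewrite hxq Pq.
case: (ex_minnP ex) => d /andP[h1 h2] hmin.
exists d; split => //.
  by apply: hmin; rewrite hxq Pq.
move=> y hy1 hy2; apply/negP => Py.
have := hmin y; rewrite hy1 Py => /(_ isT); lia.
Qed.

Ltac clr := repeat match goal with
  | H : ?P |- _ =>
    lazymatch P with
    | is_true (leq _ _) => fail
    | is_true (_ != _) => fail
    | @eq nat _ _ => fail
    | not (@eq nat _ _) => fail
    | @eq bool (_ == _) false => fail
    | is_true (odd _) => fail
    | is_true (~~ odd _) => fail
    | _ => clear H
    end
  end.
Ltac lia' := clr; lia.
Ltac podd := rewrite oddE; apply/eqP; lia'.
Ltac peven := rewrite oddE; apply/negP => /eqP; lia'.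

Theorem lemma2 (T : finType) (e : rel T)
  (e_sym : symmetric e) (e_irr : irreflexive e)
  (v : nat -> T) (p : nat) (z : T) :
  near_obstruction e v p z ->
  exists (c : nat -> T) (k : nat),
    meyniel_obstruction e c k /\
    (forall i, i < k -> on_path v p (c i) \/ c i = z).
Proof.
move=> [[Hinj Hedg] H3p Hoddp [Hchu Hcht [Hnz Hz0 Hzp] Htype]].
have chs : forall x y, path_chord e v p x y -> y = x.+2 /\ x.+2 < p.
  move=> x y /Hcht [t [h1 h2 -> ->]]; lia'.
have LA' := LA e_sym Hinj Hnz Hchu Hedg.
have LB' := LB e_sym Hinj Hnz Hchu Hedg.
have ex : exists n, (fun n => odd n && e z (v n)) n by exists p; rewrite Hoddp Hzp.
case: (ex_minnP ex) => b /andP[ob Nb] bmin.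
have bp : b <= p by apply: bmin; rewrite Hoddp Hzp.
have [a [ab Na agap]] := @prevN (fun k => e z (v k)) b Hz0 (odd_gt0 ob).
have ae : ~~ odd a.
  apply/negP => oa; have := bmin a; rewrite oa Na => /(_ isT); lia'.
have ob' : b %% 2 = 1 by rewrite modn2 ob.
have ae' : a %% 2 = 0 by rewrite modn2 (negbTE ae).
clear ob ae ex.
case: (ltnP a.+1 b) => hab.
  apply: (LA' a b).
  - lia'.
  - lia'.
  - exact: Na.
  - exact: Nb.
  - podd.
  - lia'.
  - by move=> x y h1 h2 h3 h4 Nx; move: (agap x h1 h2); rewrite Nx.
  - by move=> x x1 y1 h1 h2 Nx; move: (agap x h1 h2); rewrite Nx.
have {hab} hb : b = a.+1 by lia'.
subst b.
case: (posnP a) => [a0|apos].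
  subst a.
  case: Htype => [[_ n1 _] | [[ch13 chu] hz] | [_ n1] | [n02 n13 _ n2]].
  - by rewrite Nb in n1.
  - have n3 : ~~ e z (v 3) by case: hz => //; rewrite Nb.
    have e13 : e (v 1) (v 3) by case: ch13.
    have [c [c1 cp Nc cgap]] := @nextN (fun k => e z (v k)) 1 p Hzp ltac:(lia').
    rewrite /= in Nc cgap.
    have c3 : c != 3 by apply/eqP => E; subst c; rewrite Nc in n3.
    case: (eqVneq c 2) => [c2|c2].
    + subst c.
      have [d [d1 dp Nd dgap]] := @nextN (fun k => e z (v k)) 2 p Hzp ltac:(lia').
      rewrite /= in Nd dgap.
      have d3 : d != 3 by apply/eqP => E; subst d; rewrite Nd in n3.
      case: (boolP (odd d)) => od; move: (od); rewrite oddE => /eqP od2.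
      * apply: (LA' 2 d).
        -- lia'.
        -- lia'.
        -- exact: Nc.
        -- exact: Nd.
        -- podd.
        -- lia'.
        -- move=> x y h1 h2 _ _ Nx; by move: (dgap x h1 h2); rewrite Nx.
        -- move=> x x1 y1 h1 h2 Nx; by move: (dgap x h1 h2); rewrite Nx.
      * apply: (LB' 0 d 2).
        -- lia'.
        -- lia'.
        -- exact: dp.
        -- exact: e13.
        -- exact: Hz0.
        -- exact: Nd.
        -- peven.
        -- lia'.
        -- have H : forall x, 0 < x -> x < d -> x <> 2 -> e z (v x) -> x = 1.
             move=> x h1 h2 h3 Nx; case: (ltnP 2 x) => hxx; last lia'.
             by move: (dgap x hxx h2); rewrite Nx.
           move=> x y h1 h2 h3 h4 h5 h6 Nx Ny.
           by rewrite (H x h1 h2 h5 Nx) (H y h3 h4 h6 Ny).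
    + case: (boolP (odd c)) => oc; move: (oc); rewrite oddE => /eqP oc2.
      * apply: (LB' 1 c 2).
        -- lia'.
        -- lia'.
        -- exact: cp.
        -- exact: e13.
        -- exact: Nb.
        -- exact: Nc.
        -- peven.
        -- lia'.
        -- move=> x y h1 h2 _ _ _ _ Nx; by move: (cgap x h1 h2); rewrite Nx.
      * apply: (LB' 0 c 2).
        -- lia'.
        -- lia'.
        -- exact: cp.
        -- exact: e13.
        -- exact: Hz0.
        -- exact: Nc.
        -- peven.
        -- lia'.
        -- have H : forall x, 0 < x -> x < c -> e z (v x) -> x = 1.
             move=> x h1 h2 Nx; case: (ltnP 1 x) => hxx; last lia'.
             by move: (cgap x hxx h2); rewrite Nx.
           move=> x y h1 h2 h3 h4 h5 h6 Nx Ny.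
           by rewrite (H x h1 h2 Nx) (H y h3 h4 Ny).
  - by rewrite Nb in n1.
  - have [c [c1 cp Nc cgap]] := @nextN (fun k => e z (v k)) 1 p Hzp ltac:(lia').
    rewrite /= in Nc cgap.
    have c2 : c != 2 by apply/eqP => E; subst c; rewrite Nc in n2.
    case: (boolP (odd c)) => oc; move: (oc); rewrite oddE => /eqP oc2.
    + case: (classic (exists x1 y1, y1 <= c /\ path_chord e v p x1 y1)).
      * move=> [x1 [y1 [hy pc]]]; have [E1 E2] := chs _ _ pc; subst y1.
        have x10 : x1 != 0 by apply/eqP => E; subst x1.
        have x11 : x1 != 1 by apply/eqP => E; subst x1.
        apply: (LB' 1 c x1.+1).
        -- lia'.
        -- lia'.
        -- exact: cp.
        -- by case: pc.
        -- exact: Nb.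
        -- exact: Nc.
        -- peven.
        -- lia'.
        -- move=> x y h1 h2 _ _ _ _ Nx; by move: (cgap x h1 h2); rewrite Nx.
      * move=> nch; apply: (LA' 0 c).
        -- lia'.
        -- exact: cp.
        -- exact: Hz0.
        -- exact: Nc.
        -- podd.
        -- lia'.
        -- have H : forall x, 0 < x -> x < c -> e z (v x) -> x = 1.
             move=> x h1 h2 Nx; case: (ltnP 1 x) => hxx; last lia'.
             by move: (cgap x hxx h2); rewrite Nx.
           move=> x y h1 h2 h3 h4 Nx Ny.
           by rewrite (H x h1 h2 Nx) (H y h3 h4 Ny).
        -- move=> x x1 y1 h1 h2 Nx h3 h4 pc; apply: nch; by exists x1, y1.
    + apply: (LA' 1 c).
      * lia'.
      * exact: cp.
      * exact: Nb.
      * exact: Nc.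
      * podd.
      * lia'.
      * move=> x y h1 h2 _ _ Nx; by move: (cgap x h1 h2); rewrite Nx.
      * move=> x x1 y1 h1 h2 Nx; by move: (cgap x h1 h2); rewrite Nx.
have [a1 [a1a Na1 a1gap]] := @prevN (fun k => e z (v k)) a Hz0 apos.
rewrite /= in Na1 a1gap.
have a1e : a1 %% 2 = 0.
  have : ~~ odd a1.
    apply/negP => o; have := bmin a1; rewrite o Na1 => /(_ isT); lia'.
  by move=> /negbTE o; rewrite modn2 o.
case: (classic (exists x1 y1, [/\ a1 <= x1, y1 <= a.+1 & path_chord e v p x1 y1])).
- move=> [x1 [y1 [hx hy pc]]]; have [E1 E2] := chs _ _ pc; subst y1.
  have ech : e (v x1) (v x1.+2) by case: pc.
  case: (ltnP x1.+2 a.+1) => hya.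
  + case: (ltnP 3 (a - a1)) => hd.
    * apply: (LB' a1 a x1.+1).
      -- lia'.
      -- lia'.
      -- lia'.
      -- exact: ech.
      -- exact: Na1.
      -- exact: Na.
      -- peven.
      -- lia'.
      -- move=> x y h1 h2 _ _ _ _ Nx; by move: (a1gap x h1 h2); rewrite Nx.
    * have x1a : x1 = a1 by lia'.
      have aa : a = a1.+2 by lia'.
      subst x1.
      have a1pos : 0 < a1.
        case: (posnP a1) => // a10; exfalso.
        subst a1 a.
        case: Htype => [[_ _ n2] | [[_ chu] _] | [n02 _] | [n02 _ _ _]].
        -- by rewrite Na in n2.
        -- by have [] := chu _ _ pc.
        -- exact: n02.
        -- exact: n02.
      have [a2 [a2a Na2 a2gap]] := @prevN (fun k => e z (v k)) a1 Hz0 a1pos.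
      rewrite /= in Na2 a2gap.
      have a2e : a2 %% 2 = 0.
        have : ~~ odd a2.
          apply/negP => o; have := bmin a2; rewrite o Na2 => /(_ isT); lia'.
        by move=> /negbTE o; rewrite modn2 o.
      apply: (LB' a2 a a1.+1).
      -- lia'.
      -- lia'.
      -- lia'.
      -- exact: ech.
      -- exact: Na2.
      -- exact: Na.
      -- peven.
      -- lia'.
      -- have H : forall x, a2 < x -> x < a -> x <> a1.+1 -> e z (v x) -> x = a1.
           move=> x h1 h2 h3 Nx; case: (ltnP x a1) => hxa; last lia'.
           by move: (a2gap x h1 hxa); rewrite Nx.
         move=> x y h1 h2 h3 h4 h5 h6 Nx Ny.
         by rewrite (H x h1 h2 h5 Nx) (H y h3 h4 h6 Ny).
  + have x1e : x1.+1 = a by lia'.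
    have ap : a.+1 < p by lia'.
    have [d [d1 dp Nd dgap]] := @nextN (fun k => e z (v k)) a.+1 p Hzp ap.
    rewrite /= in Nd dgap.
    case: (eqVneq d a.+2) => [da|da].
    * subst d.
      apply: (LB' a1 a.+2 a).
      -- lia'.
      -- lia'.
      -- exact: dp.
      -- by rewrite -x1e /=.
      -- exact: Na1.
      -- exact: Nd.
      -- peven.
      -- lia'.
      -- have H : forall x, a1 < x -> x < a.+2 -> x <> a -> e z (v x) -> x = a.+1.
           move=> x h1 h2 h3 Nx; case: (ltnP x a) => hxx; last lia'.
           by move: (a1gap x h1 hxx); rewrite Nx.
         move=> x y h1 h2 h3 h4 h5 h6 Nx Ny.
         by rewrite (H x h1 h2 h5 Nx) (H y h3 h4 h6 Ny).
    * case: (boolP (odd d)) => od.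
      -- have od2 : d %% 2 = 1 by rewrite modn2 od.
         apply: (LA' a d).
         ++ lia'.
         ++ exact: dp.
         ++ exact: Na.
         ++ exact: Nd.
         ++ podd.
         ++ lia'.
         ++ have H : forall x, a < x -> x < d -> e z (v x) -> x = a.+1.
              move=> x h1 h2 Nx; case: (ltnP a.+1 x) => hxx; last lia'.
              by move: (dgap x hxx h2); rewrite Nx.
            move=> x y h1 h2 h3 h4 Nx Ny.
            by rewrite (H x h1 h2 Nx) (H y h3 h4 Ny).
         ++ move=> x x' y' h1 h2 Nx hx' hy' pc'.
            have [u1 u2] := Hchu _ _ _ _ pc' pc; lia'.
      -- have od2 : d %% 2 = 0 by rewrite modn2 (negbTE od).
         apply: (LA' a.+1 d).
         ++ lia'.
         ++ exact: dp.
         ++ exact: Nb.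
         ++ exact: Nd.
         ++ podd.
         ++ lia'.
         ++ move=> x y h1 h2 _ _ Nx; by move: (dgap x h1 h2); rewrite Nx.
         ++ move=> x x1' y1' h1 h2 Nx; by move: (dgap x h1 h2); rewrite Nx.
- move=> nch; apply: (LA' a1 a.+1).
  + lia'.
  + exact: bp.
  + exact: Na1.
  + exact: Nb.
  + podd.
  + lia'.
  + have H : forall x, a1 < x -> x < a.+1 -> e z (v x) -> x = a.
      move=> x h1 h2 Nx; case: (ltnP x a) => hxx; last lia'.
      by move: (a1gap x h1 hxx); rewrite Nx.
    move=> x y h1 h2 h3 h4 Nx Ny.
    by rewrite (H x h1 h2 Nx) (H y h3 h4 Ny).
  + move=> x x1 y1 h1 h2 Nx hx hy pc; apply: nch; by exists x1, y1.
Qed.
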